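(* Let $G$ be a finite group and $p$ a fixed prime divisor of $|G|$. Then every self-centralizing non-nilpotent subgroup of $G$ is a TI-subgroup of $G$ or subnormal in $G$ or has $p'$-order if and only if every non-nilpotent subgroup of $G$ is a TI-subgroup of $G$ or subnormal in $G$ or has $p'$-order.
   Context: All groups are finite. A subgroup $H$ of a group $G$ is a TI-subgroup of $G$ if for every $g\in G$, $H^g\cap H=1$ or $H^g\cap H=H$. A subgroup $H$ of $G$ is self-centralizing in $G$ if $C_G(H)\leq H$. A subgroup has $p'$-order if its order is not divisible by $p$. *)

(* Defs.v *)
From mathcomp Require Import all_boot all_fingroup all_solvable.
Set Implicit Arguments.
Unset Strict Implicit.
Unset Printing Implicit Defensive.
Local Open Scope group_scope.

Definition TI_subgroup (gT : finGroupType) (H G : {set gT}) : Prop :=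
  forall g, g \in G -> (H :^ g :&: H = 1) \/ (H :^ g :&: H = H).

Definition self_centralizing (gT : finGroupType) (H G : {set gT}) : Prop :=
  'C_G(H) \subset H.

Definition TI_sn_or_pprime (gT : finGroupType) (p : nat) (H G : {group gT}) : Prop :=
  TI_subgroup H G \/ H <|<| G \/ ~~ (p %| #|H|).

(* Main.v *)
Require Import Defs.
From mathcomp Require Import all_boot all_fingroup all_solvable.
From mathcomp Require Import mxrepresentation mxabelem vcharacter.
Set Implicit Arguments.
Unset Strict Implicit.
Unset Printing Implicit Defensive.
Local Open Scope group_scope.

Lemma semireg_abelian_cyclic (gT : finGroupType) (K E : {group gT}) :
  K :!=: 1 -> E \subset 'N(K) -> coprime #|K| #|E| -> semiregular K E ->
  abelian E -> cyclic E.
Proof.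
move=> ntK nKE coKE regE cEE.
apply: contraT => ncycE.
pose q := pdiv #|K|.
have q_pr : prime q by rewrite pdiv_prime // cardG_gt1.
have solE : solvable E := abelian_sol cEE.
have [Q sylQ nQE] := sol_coprime_Sylow_exists q solE nKE coKE.
have [sQK qQ _] := and3P sylQ.
have ntQ : Q :!=: 1.
  rewrite -cardG_gt1 (card_Hall sylQ) p_part_gt1.
  by rewrite /q pi_pdiv cardG_gt1.
pose V := 'Ohm_1('Z(Q)).
have qZ : q.-group 'Z(Q) := pgroupS (center_sub Q) qQ.
have abelV : q.-abelem V := Ohm1_abelem qZ (center_abelian Q).
have ntV : V :!=: 1 by rewrite Ohm1_eq1 center_nil_eq1 ?(pgroup_nil qQ).
have nVE : E \subset 'N(V).
  apply: char_norm_trans nQE; exact: gFchar_trans _ (center_char Q).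
have [W minW sWV] := minnormal_exists ntV nVE.
have [/andP[ntW nWE] _] := mingroupP minW.
have abelW : q.-abelem W := abelemS sWV abelV.
have irrW := (abelem_mx_irrP abelW ntW nWE).
have cyc := center_kquo_cyclic (irrW minW).
rewrite rker_abelem in cyc.
have cEq : abelian (E / 'C_E(W)) by apply: quotient_abelian.
rewrite (center_idP cEq) in cyc.
have ntC : 'C_E(W) != 1.
  apply: contra ncycE => /eqP C1; rewrite C1 in cyc.
  by rewrite (isog_cyclic (quotient1_isog E)).
have [e /setD1P[nte /setIP[Ee cWe]]] : exists e, e \in ('C_E(W))^#.
  by apply/set0Pn; rewrite setD_eq0 subG1.
have CK1 : 'C_K[e] = 1 by apply: regE; rewrite !inE nte Ee.
have : W \subset 'C_K[e].
  rewrite subsetI (subset_trans sWV) ?(subset_trans (Ohm_sub 1 _)) ?(subset_trans (center_sub Q)) //=.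
  by rewrite sub_cent1 (subsetP _ e cWe) // centsC.
by rewrite CK1 subG1 (negPf ntW).
Qed.

Lemma key_conj (gT : finGroupType) (L H A : {group gT}) (g : gT) :
  H * A = L -> A \subset 'C(L) -> g \in 'N(L) -> H :^ g \subset L ->
  (forall X : {group gT}, X \subset L -> abelian X -> cyclic X) ->
  H :^ g \subset H.
Proof.
move=> defL cAL nLg sHgL cycL.
have sHL : H \subset L by rewrite -defL mulG_subl.
have sAL : A \subset L by rewrite -defL mulG_subr.
have cLA : L \subset 'C(A) by rewrite centsC.
have sZHZL : 'Z(H) \subset 'Z(L).
  rewrite subsetI (subset_trans (center_sub H) sHL) /= -defL centM subsetI.
  rewrite subsetIr /=; exact: subset_trans (center_sub H) (subset_trans sHL cLA).
have LgL : L :^ g = L by apply/normP.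
have ZJ (K : {group gT}) : 'Z(K :^ g) = 'Z(K) :^ g by rewrite /center conjIg centJ.
have cycZL : cyclic 'Z(L) by apply: cycL; [apply: center_sub | apply: center_abelian].
have sZHgZL : 'Z(H) :^ g \subset 'Z(L) by rewrite -LgL ZJ conjSg.
have eqZ : 'Z(H) :^ g = 'Z(H).
  apply/eqP; rewrite (eq_subG_cyclic cycZL) ?cardJg //.
have AHg : A :&: H :^ g = A :&: H.
  apply/eqP; rewrite eqEsubset !subsetI !subsetIl /=.
  apply/andP; split.
    apply/subsetP => a /setIP[Aa Hga].
    have : a \in 'Z(H :^ g).
      rewrite inE Hga; apply: (subsetP (centS sHgL)); exact: (subsetP cAL).
    by rewrite ZJ eqZ => /(subsetP (center_sub H)).
  apply/subsetP => a /setIP[Aa Ha].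
  have : a \in 'Z(H).
    rewrite inE Ha; apply: (subsetP (centS sHL)); exact: (subsetP cAL).
  by rewrite -eqZ -ZJ => /(subsetP (center_sub _)).
apply/subsetP => x Hgx.
have Lx : x \in L := subsetP sHgL x Hgx.
move: (Lx); rewrite -defL => /mulsgP[h a Hh Aa defx].
have cxa : a \in 'C[x].
  by apply/cent1P; exact: (centP (subsetP cAL a Aa)) x Lx.
pose X := (<[x]> <*> <[a]>)%G.
have cX : abelian X.
  by rewrite abelianY !cycle_abelian /= cent_cycle cycle_subG cxa.
have sXL : X \subset L by rewrite join_subG !cycle_subG Lx (subsetP sAL).
have cycX := cycL X sXL cX.
pose M1 := (X :&: H)%G; pose M2 := (X :&: H :^ g)%G; pose B := (X :&: A)%G.
have XE (M : {group gT}) : M \subset X -> x \in M * B -> M * B = X.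
  move=> sMX xMB; apply/eqP; rewrite eqEsubset mul_subG ?subsetIl //=.
  have cMB : B \subset 'C(M) by apply: sub_abelian_cent2 cX (subsetIl _ _) sMX.
  rewrite -cent_joinEr // join_subG !cycle_subG.
  rewrite -(cent_joinEr cMB) in xMB.
  rewrite xMB /=; apply: (subsetP (joing_subr M B)).
  by rewrite inE Aa andbT; apply: (subsetP (joing_subr _ _)); apply: cycle_id.
have Xa : a \in X by rewrite (subsetP (joing_subr _ _)) ?cycle_id.
have Xx : x \in X by rewrite (subsetP (joing_subl _ _)) ?cycle_id.
have Xh : h \in X by rewrite -(mulgK a h) -defx groupM ?groupV.
have eM1 : M1 * B = X.
  by apply: XE; [apply: subsetIl | rewrite defx mem_mulg // inE ?Xh ?Xa].
have eM2 : M2 * B = X.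
  by apply: XE; [apply: subsetIl | rewrite -(mulg1 x) mem_mulg // inE ?Xx ?group1].
have eI : M1 :&: B = M2 :&: B.
  apply/setP=> y; have := congr1 (fun S : {set gT} => y \in S) AHg; rewrite /= !inE.
  case: (y \in X); case: (y \in A) => //=; rewrite ?andbT ?andbF // => ->.
have c1 := mul_cardG M1 B; have c2 := mul_cardG M2 B.
rewrite eM1 in c1; rewrite eM2 in c2.
have eI' : #|M1 :&: B| = #|M2 :&: B| by rewrite eI.
have eqc : #|M1| = #|M2| by apply/eqP; rewrite -(eqn_pmul2r (cardG_gt0 B)) c1 c2 eI'.
have eM : M1 :=: M2 by apply/eqP; rewrite (eq_subG_cyclic cycX) ?subsetIl ?eqc.
have : x \in M2 by rewrite inE Xx.
by rewrite -eM => /setIP[].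
Qed.

Lemma compl_abelian_cyclic (gT : finGroupType) (G T E : {group gT}) :
  [Frobenius G with complement T] -> E \subset T -> abelian E -> cyclic E.
Proof.
move=> frobT sET cEE; have [K frobK] := Frobenius_kernel_exists frobT.
have [defG ntK _ _ _] := Frobenius_context frobK.
have [_ _ nKT _] := sdprodP defG.
apply: (semireg_abelian_cyclic ntK) => //.
- exact: subset_trans sET nKT.
- exact: coprime_dvdr (cardSg sET) (Frobenius_coprime frobK).
- exact: semiregularS (subxx K) sET (Frobenius_reg_ker frobK).
Qed.

Lemma TI_norm (gT : finGroupType) (T G : {group gT}) g :
  TI_subgroup T G -> g \in G -> T :^ g :&: T != 1 -> g \in 'N(T).
Proof.
move=> tiT Gg nt; case: (tiT g Gg) => [e|e]; first by rewrite e eqxx in nt.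
have sTTg : T \subset T :^ g by apply/setIidPr.
apply/normP; apply/eqP; rewrite eq_sym eqEcard sTTg cardJg leqnn //.
Qed.

Theorem theorem1p6 (gT : finGroupType) (G : {group gT}) (p : nat) :
  prime p -> p %| #|G| ->
  ((forall H : {group gT}, H \subset G -> self_centralizing H G ->
       ~~ nilpotent H -> TI_sn_or_pprime p H G)
   <->
   (forall H : {group gT}, H \subset G ->
       ~~ nilpotent H -> TI_sn_or_pprime p H G)).
Proof.
move=> pr_p pG; split => [hyp H sHG nnilH | hyp H sHG _ nnilH]; last exact: hyp.
rewrite /TI_sn_or_pprime.
have [snH | nsnH] := boolP (H <|<| G); first by right; left.
have [pH | npH] := boolP (p %| #|H|); last by right; right.
left.
have keyTI (X : {group gT}) : H \subset X -> X \subset G -> 'C_G(X) \subset X ->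
    H <|<| X -> TI_subgroup X G.
  move=> sHX sXG cX snHX.
  have nnilX : ~~ nilpotent X by apply: contra nnilH => /(nilpotentS sHX).
  case: (hyp X sXG cX nnilX) => [//|[snX|npX]].
  - by case/negP: nsnH; apply: subnormal_trans snHX snX.
  - by case/negP: npX; apply: dvdn_trans pH (cardSg sHX).
pose C := 'C_G(H).
pose P := fun X : {group gT} => [&& C \subset X, X \subset G & H <|<| X].
have [T maxT] : {T : {group gT} | maxgroup T P}.
  apply: ex_maxgroup; exists ('N_G(H))%G; apply/and3P; split.
  - exact: setIS G (cent_sub H).
  - exact: subsetIl.
  - exact: normal_subnormal (normalSG sHG).
have /and3P[sCT sTG snHT] := maxgroupp maxT.
have sHT : H \subset T := subnormal_sub snHT.
have cT : 'C_G(T) \subset T by apply: subset_trans sCT; apply: setIS; apply: centS.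
have tiT := keyTI T sHT sTG cT snHT.
have nTT : 'N_G(T) = T.
  apply: (maxgroupP maxT).2; last by rewrite subsetI sTG normG.
  apply/and3P; split.
  - by apply: subset_trans sCT _; rewrite subsetI sTG normG.
  - exact: subsetIl.
  - exact: subnormal_trans snHT (normal_subnormal (normalSG sTG)).
have neTG : T != G :> {set gT}.
  by apply: contra nsnH => /eqP defT; rewrite -defT.
have ntT : T^# != set0.
  rewrite setD_eq0; apply: contra nnilH => sT1.
  apply: nilpotentS sHT _; have /eqP -> : T :==: 1 by rewrite -subG1.
  exact: nilpotent1.
have frobT : [Frobenius G with complement T].
  apply/andP; split => //; apply/normedTI_P; split => //.
    by rewrite subsetI sTG normD1 normG.
  move=> g Gg; rewrite -setI_eq0 => /set0Pn[y /setIP[y1 y2]].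
  rewrite -nTT inE Gg; apply: TI_norm tiT Gg _.
  move: y1 y2; rewrite conjD1g !inE => /andP[ny1 Ty] /andP[_ Tgy].
  apply/eqP => e; have : y \in T :^ g :&: T by rewrite inE Tgy Ty.
  by rewrite e inE (negPf ny1).
have abT (E : {group gT}) : E \subset T -> abelian E -> cyclic E.
  by move=> sET cE; apply: compl_abelian_cyclic frobT sET cE.
move=> g Gg; have [e|ntD] := eqVneq (H :^ g :&: H) 1; first by left.
right.
suff sHgH : H :^ g \subset H.
  have eq : H :^ g = H by apply/eqP; rewrite eqEcard sHgH cardJg leqnn.
  by rewrite eq setIid.
pose PA := fun A : {group gT} => (A \subset C) && abelian A.
have [A maxA] : {A : {group gT} | maxgroup A PA}.
  by apply: ex_maxgroup; exists 1%G; rewrite /PA sub1G abelian1.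
have /andP[sAC cAA] := maxgroupp maxA.
have cHA : A \subset 'C(H) by apply: subset_trans sAC (subsetIr _ _).
pose L := (H <*> A)%G.
have defL : H * A = L by rewrite /= cent_joinEr.
have sLG : L \subset G by rewrite join_subG sHG (subset_trans sAC (subsetIl _ _)).
have sLT : L \subset T by rewrite join_subG sHT (subset_trans sAC sCT).
have cL : 'C_G(L) \subset L.
  apply/subsetP => y /setIP[Gy]; rewrite centY inE => /andP[cHy cAy].
  have Cy : y \in C by rewrite inE Gy.
  pose Y := (A <*> <[y]>)%G.
  have PY : PA Y.
    rewrite /PA join_subG sAC cycle_subG Cy abelianY cAA cycle_abelian /=.
    by rewrite cycle_subG.
  have eY : Y :=: A by apply: (maxgroupP maxA).2 PY (joing_subl _ _).
  have : y \in Y by rewrite (subsetP (joing_subr _ _)) ?cycle_id.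
  by rewrite eY => /(subsetP (joing_subr H A)).
have nsHL : H <| L.
  by rewrite /normal joing_subl join_subG normG (subset_trans cHA (cent_sub H)).
have tiL := keyTI L (joing_subl _ _) sLG cL (normal_subnormal nsHL).
have nLg : g \in 'N(L).
  apply: TI_norm tiL Gg _; apply: contra ntD => /eqP e.
  by apply/eqP/trivgP; rewrite -e setISS ?conjSg ?joing_subl.
have sHgL : H :^ g \subset L by rewrite -(normP nLg) conjSg joing_subl.
have cAL : A \subset 'C(L) by rewrite centY subsetI cHA.
apply: key_conj defL cAL nLg sHgL _.
by move=> X sXL cX; apply: abT (subset_trans sXL sLT) cX.
Qed.
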